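(* Let $\mathcal C$ be an irredundant 3-SAT formula. (a) If $u,v,w,a$ are distinct variables with $\bar u v w\in\mathcal C$, then at most one of the clauses $auv$, $avw$ belongs to $\mathcal C$. (b) If $u,a,b,c$ are distinct variables with $uab\in\mathcal C$ and $\bar u ac\in\mathcal C$, then $abc\notin\mathcal C$.
   Context: A clause is a conjunction of three literals on three distinct variables, written as juxtaposition (e.g. $\bar u vw=\bar u\wedge v\wedge w$); a formula is a nonempty set of clauses. $\mathcal C$ is irredundant if every $C\in\mathcal C$ has a witness: an assignment satisfying $C$ and no other clause of $\mathcal C$. *)

(* Defs.v *)
From mathcomp Require Import all_boot.
Set Implicit Arguments. Unset Strict Implicit. Unset Printing Implicit Defensive.

(* A literal over variables V: (x, true) is x, (x, false) is the negation of x. *)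
Definition lit (V : finType) := (V * bool)%type.

Definition pos (V : finType) (x : V) : lit V := (x, true).
Definition neg (V : finType) (x : V) : lit V := (x, false).

(* A clause is a conjunction of three literals on three distinct variables,
   represented as the set of its literals. *)
Definition is_clause (V : finType) (C : {set lit V}) : Prop :=
  #|C| = 3 /\ #|[set l.1 | l in C]| = 3.

Definition cl (V : finType) (l1 l2 l3 : lit V) : {set lit V} := [set l1; l2; l3].

Definition is_formula (V : finType) (F : {set {set lit V}}) : Prop :=
  F != set0 /\ forall C, C \in F -> is_clause C.

Definition sat (V : finType) (a : V -> bool) (C : {set lit V}) : Prop :=
  forall l, l \in C -> a l.1 = l.2.

Definition witness (V : finType) (F : {set {set lit V}}) (C : {set lit V})
  (a : V -> bool) : Prop :=
  sat a C /\ forall D, D \in F -> D <> C -> ~ sat a D.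

Definition irredundant (V : finType) (F : {set {set lit V}}) : Prop :=
  forall C, C \in F -> exists a : V -> bool, witness F C a.

(* Main.v *)
Require Import Defs.
From mathcomp Require Import all_boot.
Set Implicit Arguments. Unset Strict Implicit.

Lemma sat_cl (V : finType) (f : V -> bool) (l1 l2 l3 : lit V) :
  f l1.1 = l1.2 -> f l2.1 = l2.2 -> f l3.1 = l3.2 -> sat f (cl l1 l2 l3).
Proof. by move=> h1 h2 h3 l; rewrite !inE -orbA => /orP [/eqP ->|/orP [/eqP ->|/eqP ->]]. Qed.

Lemma sat_in (V : finType) (f : V -> bool) (C : {set lit V}) l :
  sat f C -> l \in C -> f l.1 = l.2.
Proof. by move=> h; apply: h. Qed.

Lemma cl_neq (V : finType) (C D : {set lit V}) l :
  l \in C -> l \notin D -> D <> C.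
Proof. by move=> h1 h2 E; rewrite E h1 in h2. Qed.

Theorem mainTheorem7 (V : finType) (F : {set {set lit V}})
  (hF : is_formula F) (hirr : irredundant F) :
  (forall u v w a : V, uniq [:: u; v; w; a] ->
     cl (neg u) (pos v) (pos w) \in F ->
     ~ (cl (pos a) (pos u) (pos v) \in F /\ cl (pos a) (pos v) (pos w) \in F))
  /\
  (forall u a b c : V, uniq [:: u; a; b; c] ->
     cl (pos u) (pos a) (pos b) \in F ->
     cl (neg u) (pos a) (pos c) \in F ->
     cl (pos a) (pos b) (pos c) \notin F).
Proof.
split.
- move=> u v w a U H1 [H2 H3].
  have [f [hs hn]] := hirr _ H3.
  have fa : f a = true by apply: (sat_in hs (l := pos a)); rewrite !inE eqxx.
  have fv : f v = true by apply: (sat_in hs (l := pos v)); rewrite !inE eqxx ?orbT.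
  have fw : f w = true by apply: (sat_in hs (l := pos w)); rewrite !inE eqxx ?orbT.
  case fu : (f u).
  + apply: (hn _ H2).
      apply: (cl_neq (l := pos w)); first by rewrite !inE eqxx ?orbT.
      have wu : (w == u) = false by move: U; case: (w =P u) => // ->; rewrite /= !inE ?eqxx ?orbT.
      have wa : (w == a) = false by move: U; case: (w =P a) => // ->; rewrite /= !inE ?eqxx ?orbT ?andbF.
      have wv : (w == v) = false by move: U; case: (w =P v) => // ->; rewrite /= !inE ?eqxx ?orbT ?andbF.
      by rewrite !inE /pos !xpair_eqE !andbT wu wa wv.
    by apply: sat_cl.
  + apply: (hn _ H1).
      apply: (cl_neq (l := pos a)); first by rewrite !inE eqxx.
      have av : (a == v) = false by move: U; case: (a =P v) => // ->; rewrite /= !inE ?eqxx ?orbT ?andbF.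
      have aw : (a == w) = false by move: U; case: (a =P w) => // ->; rewrite /= !inE ?eqxx ?orbT ?andbF.
      by rewrite !inE /pos /neg !xpair_eqE !andbF !andbT av aw.
    by apply: sat_cl => //=; rewrite fu.
- move=> u a b c U H1 H2; apply/negP => H3.
  have [f [hs hn]] := hirr _ H3.
  have fa : f a = true by apply: (sat_in hs (l := pos a)); rewrite !inE eqxx.
  have fb : f b = true by apply: (sat_in hs (l := pos b)); rewrite !inE eqxx ?orbT.
  have fc : f c = true by apply: (sat_in hs (l := pos c)); rewrite !inE eqxx ?orbT.
  have uc : (c == u) = false by move: U; case: (c =P u) => // ->; rewrite /= !inE ?eqxx ?orbT.
  have ac : (c == a) = false by move: U; case: (c =P a) => // ->; rewrite /= !inE ?eqxx ?orbT ?andbF.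
  have bc : (c == b) = false by move: U; case: (c =P b) => // ->; rewrite /= !inE ?eqxx ?orbT ?andbF.
  have ab : (b == a) = false by move: U; case: (b =P a) => // ->; rewrite /= !inE ?eqxx ?orbT ?andbF.
  case fu : (f u).
  + apply: (hn _ H1).
      apply: (cl_neq (l := pos c)); first by rewrite !inE eqxx ?orbT.
      by rewrite !inE /pos !xpair_eqE !andbT uc ac bc.
    by apply: sat_cl.
  + apply: (hn _ H2).
      apply: (cl_neq (l := pos b)); first by rewrite !inE eqxx ?orbT.
      by rewrite !inE /pos /neg !xpair_eqE !andbT !andbF ab (eq_sym b c) bc.
    by apply: sat_cl => //=; rewrite fu.
Qed.
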